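(* In the procedure of obtaining a 2-swap optimal solution for $P2\|C_{\max}$ with $n$ jobs (i.e., repeatedly replacing the current schedule by an improving 2-swap neighbor), the critical machine changes at most $O(n^2)$ times.
   Context: Problem $P2\|C_{\max}$: $n$ jobs with processing times $p_j>0$, two identical machines. A schedule $\sigma=(M_1,M_2)$ partitions the jobs into sets processed on machines 1 and 2; loads $L_i=\sum_{j\in M_i}p_j$, makespan $\max_iL_i$; a machine whose load equals the makespan is critical. A 2-swap neighbor is obtained by choosing $k'$ jobs on one machine and $k''$ on the other with $k'+k''\le2$ and interchanging their machine assignments; it is improving if its makespan is strictly smaller. A 2-swap optimal solution has no improving 2-swap neighbor. *)

(* Defs.v *)
(* Two machines are encoded by bool: true = machine 1, false = machine 2.
   A schedule is an assignment of each job 'I_n to a machine. *)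
From HB Require Import structures.
From mathcomp Require Import all_boot all_order all_algebra.
Set Implicit Arguments. Unset Strict Implicit. Unset Printing Implicit Defensive.
Import Order.TTheory GRing.Theory Num.Theory.
Local Open Scope ring_scope.

Definition schedule (n : nat) := {ffun 'I_n -> bool}.

Definition load (R : realFieldType) (n : nat) (p : 'I_n -> R) (s : schedule n) (b : bool) : R :=
  \sum_(j < n | s j == b) p j.

Definition makespan (R : realFieldType) (n : nat) (p : 'I_n -> R) (s : schedule n) : R :=
  Num.max (load p s true) (load p s false).

Definition critical (R : realFieldType) (n : nat) (p : 'I_n -> R) (s : schedule n) (b : bool) : bool :=
  load p s b == makespan p s.

Definition two_swap_neighbor (n : nat) (s t : schedule n) : Prop :=
  exists A : {set 'I_n}, (#|A| <= 2)%N /\ forall j, t j = (if j \in A then ~~ s j else s j).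

Definition improving_two_swap (R : realFieldType) (n : nat) (p : 'I_n -> R) (s t : schedule n) : Prop :=
  two_swap_neighbor s t /\ makespan p t < makespan p s.

Definition critical_changes (R : realFieldType) (n : nat) (p : 'I_n -> R) (s t : schedule n) : bool :=
  [exists b : bool, critical p s b != critical p t b].

(* Main.v *)
Require Import Defs.
From mathcomp Require Import all_boot all_order all_algebra.
From mathcomp Require Import lra zify.
Import Order.TTheory GRing.Theory Num.Theory.
Local Open Scope ring_scope.

Lemma absE (R : realFieldType) (x : R) : (`|x| = x /\ 0 <= x) \/ (`|x| = - x /\ x < 0).
Proof. case: (leP 0 x) => h; [left; split => //; exact: ger0_norm | right; split => //; exact: ltr0_norm]. Qed.

Arguments absE {R}.
Lemma key_impr (R : realFieldType) (x1 y1 x2 y2 : R) :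
  x1 + y1 = x2 + y2 -> Num.max x2 y2 < Num.max x1 y1 -> `|x2 - y2| < `|x1 - y1|.
Proof.
move=> hs; case: (leP x1 y1) => h1; case: (leP x2 y2) => h2 hm;
have [[-> ?]|[-> ?]] := absE (x1 - y1); have [[-> ?]|[-> ?]] := absE (x2 - y2); lra.
Qed.

Lemma key_flip (R : realFieldType) (x1 y1 x2 y2 : R) :
  `|x2 - y2| < `|x1 - y1| ->
  ((x1 == Num.max x1 y1) != (x2 == Num.max x2 y2)) || ((y1 == Num.max x1 y1) != (y2 == Num.max x2 y2)) ->
  `|(x1 - y1) - (x2 - y2)| = `|x1 - y1| + `|x2 - y2|.
Proof.
move=> ha; case: (leP x1 y1) => h1; case: (leP x2 y2) => h2;
rewrite ?eqxx /=;
repeat (case: eqP => ? /=);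
move=> // _;
have [[-> ?]|[-> ?]] := absE (x1 - y1); have [[-> ?]|[-> ?]] := absE (x2 - y2);
have [[-> ?]|[-> ?]] := absE (x1 - y1 - (x2 - y2)); try lra.
Qed.
Set Implicit Arguments. Unset Strict Implicit.
Definition fo (R : realFieldType) (n : nat) (p : 'I_n -> R) (o : option ('I_n * bool)) : R :=
  if o is Some (i, b) then (if b then p i else - p i) else 0.

Lemma load_sum (R : realFieldType) (n : nat) (p : 'I_n -> R) (s : schedule n) :
  load p s true + load p s false = \sum_j p j.
Proof.
rewrite /load [RHS](bigID (fun j => s j)) /=; congr (_ + _); apply: eq_bigl => j; by case: (s j).
Qed.

Lemma load_diff (R : realFieldType) (n : nat) (p : 'I_n -> R) (s t : schedule n) (A : {set 'I_n}) :
  (forall j, t j = if j \in A then ~~ s j else s j) ->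
  load p s true - load p t true = \sum_(j in A) fo p (Some (j, s j)).
Proof.
move=> ht; rewrite /load [RHS]big_mkcond /=.
rewrite (big_mkcond (fun j => s j == true)) (big_mkcond (fun j => t j == true)) /=.
rewrite -sumrB.
apply: eq_bigr => j _; rewrite ht; case: (j \in A); case: (s j) => /=; lra.
Qed.

Lemma repr2 (R : realFieldType) (n : nat) (p : 'I_n -> R) (sg : 'I_n -> bool) (A : {set 'I_n}) :
  (#|A| <= 2)%N -> exists o1 o2, \sum_(j in A) fo p (Some (j, sg j)) = fo p o1 + fo p o2.
Proof.
case hc: #|A| => [|[|[|c]]] // _.
- exists None, None; by rewrite (cards0_eq hc) big_set0 /= addr0.
- have /cards1P [x ->] : #|A| == 1%N by rewrite hc.
  exists (Some (x, sg x)), None; by rewrite big_set1 /= addr0.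
- have /cards2P [x [y [nxy ->]]] : #|A| == 2%N by rewrite hc.
  exists (Some (x, sg x)), (Some (y, sg y)).
  by rewrite big_setU1 ?big_set1 // in_set1.
Qed.

Theorem lemma6 :
  exists C : nat,
  forall (R : realFieldType) (n : nat) (p : 'I_n -> R),
    (forall j, 0 < p j) ->
    forall (m : nat) (s : nat -> schedule n),
      (forall k, (k < m)%N -> improving_two_swap p (s k) (s k.+1)) ->
      (count (fun k => critical_changes p (s k) (s k.+1)) (iota 0 m) <= C * n ^ 2)%N.
Proof.
exists 8%N => R n p pos m s imp.
pose L := fun k b => load p (s k) b.
pose D := fun k => L k true - L k false.
pose a := fun k => `|D k|.
have adec : forall k, (k < m)%N -> a k.+1 < a k.
  move=> k /imp [_ h]; apply: key_impr; [by rewrite !load_sum | exact h].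
have amono : forall i d, (i + d <= m)%N -> a (i + d)%N <= a i.
  move=> i; elim=> [|d IH] h; first by rewrite addn0.
  rewrite addnS in h *; apply: le_trans (IH (ltnW h)); apply/ltW/adec; exact h.
pose flip := fun k => critical_changes p (s k) (s k.+1).
pose u := fun k => `|D k - D k.+1|.
have uflip : forall k, (k < m)%N -> flip k -> u k = a k + a k.+1.
  move=> k km /existsP [b hb]; apply: key_flip; first exact: adec km.
  rewrite /critical /makespan in hb.
  by case: b hb => hb; rewrite hb ?orbT.
have upos : forall k, (k < m)%N -> flip k -> 0 < u k.
  move=> k km fk; rewrite uflip //; have := adec k km; have := normr_ge0 (D k.+1).
  rewrite /a; lra.
have umono : forall k k', (k < k')%N -> (k' < m)%N -> flip k -> flip k' -> u k' < u k.
  move=> k k' kk' k'm fk fk'.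
  have km : (k < m)%N by apply: ltn_trans k'm.
  rewrite (uflip k) // (uflip k') //.
  have h1 := adec k km; have h2 := adec k' k'm.
  have h3 : a k' <= a k.+1.
    have -> : k' = (k.+1 + (k' - k.+1))%N by rewrite subnKC.
    apply: amono; rewrite subnKC //; exact: ltnW.
  lra.
pose V := [seq 2 * `|fo p t.1 + fo p t.2| | t <- enum {: option ('I_n * bool) * option ('I_n * bool)}].
have uV : forall k, (k < m)%N -> u k \in V.
  move=> k /imp [[A [hA ht]] _].
  have hd := load_diff p ht.
  have [o1 [o2 ho]] := repr2 p (s k) hA.
  have e : D k - D k.+1 = 2 * (load p (s k) true - load p (s k.+1) true).
    have := load_sum p (s k); have := load_sum p (s k.+1); rewrite /D /L; lra.
  rewrite /u e normrM (ger0_norm (_ : 0 <= 2)) // hd ho.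
  apply/mapP; exists (o1, o2) => //; by rewrite mem_enum.
rewrite -size_filter.
set fl := filter _ (iota 0 m).
have hfl : forall k, k \in fl -> flip k && (k < m)%N.
  by move=> k; rewrite mem_filter mem_iota add0n.
have U : uniq (0 :: map u fl).
  rewrite /=; apply/andP; split.
    apply/mapP => [[k hk e]]; move/andP: (hfl k hk) => [fk km].
    by have := upos k km fk; rewrite -e ltxx.
  rewrite map_inj_in_uniq ?filter_uniq ?iota_uniq //.
  move=> k k' hk hk' e; move/andP: (hfl k hk) => [fk km]; move/andP: (hfl k' hk') => [fk' km'].
  case: (ltngtP k k') => // h.
    by have := umono k k' h km' fk fk'; rewrite e ltxx.
  by have := umono k' k h km fk' fk; rewrite e ltxx.
have S : {subset 0 :: map u fl <= V}.
  move=> x; rewrite inE => /orP [/eqP -> | /mapP [k hk ->]].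
    apply/mapP; exists (None, None); first by rewrite mem_enum.
    by rewrite /= addr0 normr0 mulr0.
  by move/andP: (hfl k hk) => [_ km]; apply: uV.
have := uniq_leq_size U S.
rewrite /= size_map size_map -cardT card_prod !card_option card_prod card_ord card_bool.
move=> h; nia.
Qed.
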